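(* Let $b\ge1$, $c_{\mathrm{ov}}\ge0$, $c_i>0$, $c_i^\sharp\ge0$, $d_i:=c_{\mathrm{ov}}+\sum_{j\ge i}(c_j+c_j^\sharp)$, $L^1_{i,\{k,\dots,b\}}\ge0$, and consider the program $\min\sum_id_iq_i$ subject to $q\ge0$ and $g_i(q):=\left(\sum_{s=1}^iq_s\right)^2-\sum_{s=1}^iq_sL^1_{i,\{s,\dots,b\}}\ge0$ for $i\in[b]$. Let $q^\star$ be a KKT point, i.e. $q^\star$ is feasible and there are $\lambda_i,\eta_i\ge0$ with $0=d_k-\sum_{i=k}^b\lambda_i\big(2\sum_{s=1}^iq^\star_s-L^1_{i,\{k,\dots,b\}}\big)-\eta_k$ for all $k$, $\lambda_ig_i(q^\star)=0$ and $\eta_iq_i^\star=0$ for all $i$. If $\{j:q^\star_j>0\}=\{k\}$, then $$q^\star_k=\max_{i\ge k}L^1_{i,\{k,\dots,b\}}.$$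
   Context: This program is a reformulation of the cost minimization for randomized progressive training under layer-wise $(L^0,L^1)$-smoothness. *)

(* Defs.v *)
(* Indices are 1-based naturals 1..b. *)
From HB Require Import structures.
From mathcomp Require Import all_boot all_order all_algebra.
Set Implicit Arguments. Unset Strict Implicit. Unset Printing Implicit Defensive.
Import Order.TTheory GRing.Theory Num.Theory.
Local Open Scope ring_scope.

Definition dcoef (R : realFieldType) (b : nat) (cov : R) (c cs : nat -> R) (i : nat) : R :=
  cov + \sum_(i <= j < b.+1) (c j + cs j).

Definition psum (R : realFieldType) (q : nat -> R) (i : nat) : R :=
  \sum_(1 <= s < i.+1) q s.

(* L i k stands for L^1_{i,{k,...,b}}.
   g_i(q) := (sum_{s<=i} q_s)^2 - sum_{s<=i} q_s L^1_{i,{s..b}} *)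
Definition gcon (R : realFieldType) (L : nat -> nat -> R) (q : nat -> R) (i : nat) : R :=
  (psum q i) ^+ 2 - \sum_(1 <= s < i.+1) q s * L i s.

(* Main.v *)
Require Import Defs.
From HB Require Import structures.
From mathcomp Require Import all_boot all_order all_algebra.
From mathcomp Require Import lra.
Import Order.TTheory GRing.Theory Num.Theory.
Local Open Scope ring_scope.

Lemma bigmax_ge_mem (R : realFieldType) (r : seq nat) (F : nat -> R) i :
  i \in r -> F i <= \big[Num.max/0]_(j <- r) F j.
Proof.
elim: r => // a r IH; rewrite in_cons big_cons le_max => /orP [/eqP->|/IH->].
  by rewrite lexx.
by rewrite orbT.
Qed.

Lemma bigmax_le_all (R : realFieldType) (r : seq nat) (F : nat -> R) x :
  0 <= x -> (forall i, i \in r -> F i <= x) -> \big[Num.max/0]_(j <- r) F j <= x.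
Proof.
move=> x0; elim: r => [|a r IH] H; first by rewrite big_nil.
rewrite big_cons ge_max H ?mem_head //= IH // => i ir.
by apply: H; rewrite in_cons ir orbT.
Qed.

Lemma sum_single (R : realFieldType) (b k i : nat) (q F : nat -> R) :
  (forall s, (1 <= s <= b)%N -> s != k -> q s = 0) ->
  (1 <= k <= i)%N -> (i <= b)%N ->
  \sum_(1 <= s < i.+1) q s * F s = q k * F k.
Proof.
move=> Hq /andP [k1 ki] ib.
rewrite (bigD1_seq k) /=; last by rewrite iota_uniq.
  rewrite big1_seq ?addr0 // => s /andP [sk]; rewrite mem_index_iota => /andP [s1 si].
  by rewrite Hq ?mul0r // s1 /=; apply: leq_trans ib.
by rewrite mem_index_iota k1 ltnS.
Qed.

Theorem lemma5 (R : realFieldType) (b : nat) (cov : R) (c cs : nat -> R)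
  (L : nat -> nat -> R) (q lam eta : nat -> R) (k : nat) :
  (1 <= b)%N ->
  0 <= cov ->
  (forall i, (1 <= i <= b)%N -> 0 < c i) ->
  (forall i, (1 <= i <= b)%N -> 0 <= cs i) ->
  (forall i j, (1 <= i <= b)%N -> (1 <= j <= b)%N -> 0 <= L i j) ->
  (* feasibility *)
  (forall i, (1 <= i <= b)%N -> 0 <= q i) ->
  (forall i, (1 <= i <= b)%N -> 0 <= gcon L q i) ->
  (* multipliers *)
  (forall i, (1 <= i <= b)%N -> 0 <= lam i) ->
  (forall i, (1 <= i <= b)%N -> 0 <= eta i) ->
  (* stationarity *)
  (forall j, (1 <= j <= b)%N ->
     0 = dcoef b cov c cs j
         - \sum_(j <= i < b.+1) lam i * (2 * psum q i - L i j) - eta j) ->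
  (* complementary slackness *)
  (forall i, (1 <= i <= b)%N -> lam i * gcon L q i = 0) ->
  (forall i, (1 <= i <= b)%N -> eta i * q i = 0) ->
  (* support of q is exactly {k} *)
  (1 <= k <= b)%N ->
  (forall j, (1 <= j <= b)%N -> (0 < q j <-> j = k)) ->
  q k = \big[Num.max/0]_(k <= i < b.+1) L i k.
Proof.
move=> b1 cov0 Hc Hcs HL Hq Hg Hlam Heta Hst Hcl Hce Hk Hsupp.
have qk0 : 0 < q k by apply/(Hsupp k Hk).
have Hq0 : forall s, (1 <= s <= b)%N -> s != k -> q s = 0.
  move=> s sb sk; apply/eqP; rewrite eq_le Hq // andbT leNgt.
  by apply/negP => /(Hsupp s sb) /eqP; rewrite (negbTE sk).
case/andP: Hk => k1 kb.
have Hps : forall i, (k <= i <= b)%N -> psum q i = q k.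
  move=> i /andP [ki ib]; rewrite /psum.
  rewrite (eq_bigr (fun s => q s * 1)); last by move=> s _; rewrite mulr1.
  by rewrite (@sum_single _ b k i q (fun _ => 1)) ?mulr1 // k1.
have Hgc : forall i, (k <= i <= b)%N -> gcon L q i = q k * (q k - L i k).
  move=> i /andP [ki ib]; rewrite /gcon Hps ?ki //.
  rewrite (@sum_single _ b k i q (L i)) ?k1 //.
  by rewrite mulrBr expr2.
have kb' : (1 <= k <= b)%N by rewrite k1.
have etak : eta k = 0.
  by have := Hce k kb' => /eqP; rewrite mulf_eq0 (gt_eqF qk0) orbF => /eqP.
have dpos : 0 < dcoef b cov c cs k.
  rewrite /dcoef big_ltn ?ltnS //.
  have : 0 <= \sum_(k.+1 <= j < b.+1) (c j + cs j).
    rewrite big_seq; apply: sumr_ge0 => j; rewrite mem_index_iota => /andP [j1 jb].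
    have jb' : (1 <= j <= b)%N by rewrite ltnS in jb; rewrite jb andbT (leq_trans k1) // ltnW.
    by apply: addr_ge0; [apply: ltW; apply: Hc | apply: Hcs].
  have := Hc k kb'; have := Hcs k kb'; lra.
have [i ir lami] : exists2 i, i \in index_iota k b.+1 & lam i != 0.
  case: (boolP (has (fun i => lam i != 0) (index_iota k b.+1))) => [/hasP [i ir li]|/hasPn H].
    by exists i.
  exfalso; have := Hst k kb'; rewrite etak subr0.
  rewrite big1_seq ?subr0 => [E|j /andP [_ /H]]; last by rewrite negbK => /eqP ->; rewrite mul0r.
  by move: dpos; rewrite -E ltxx.
move: ir; rewrite mem_index_iota ltnS => ir.
have ib : (1 <= i <= b)%N by case/andP: ir => ki ->; rewrite (leq_trans k1 ki).
have := Hcl i ib; rewrite Hgc // => /eqP; rewrite !mulf_eq0 (negbTE lami) (gt_eqF qk0) /=.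
rewrite subr_eq0 => /eqP qL.
apply/eqP; rewrite eq_le; apply/andP; split.
  by rewrite qL; apply: bigmax_ge_mem; rewrite mem_index_iota ltnS.
apply: bigmax_le_all; first exact: ltW.
move=> j; rewrite mem_index_iota ltnS => jr.
have jb : (1 <= j <= b)%N by case/andP: jr => kj ->; rewrite (leq_trans k1 kj).
have := Hg j jb; rewrite Hgc // pmulr_rge0 // subr_ge0 //.
Qed.
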